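(* Let $X$ be a normal Hausdorff space which contains a subspace homeomorphic to $[0,1]$ (an arc). Then for any two distinct points $x,u\in X$ there is a continuous quotient surjection $f\colon X\to[0,1]$ with $f(x)=0$ and $f(u)=1$.
   Context: A surjection $f\colon X\to Y$ is a quotient map if for every $G\subseteq Y$, $G$ is open in $Y$ iff $f^{-1}(G)$ is open in $X$. A continuous quotient surjection $f\colon X\to[0,1]$ with $f(x)=0$, $f(u)=1$ is what the paper calls a quotient Urysohn function for $x$ and $u$. *)

(* Defs.v *)
(* X is a topologicalType, [0,1] is the unit interval
   of an arbitrary realType R (all realTypes are isomorphic to the reals). *)
From HB Require Import structures.
From mathcomp Require Import all_boot all_order all_algebra.
From mathcomp Require Import all_classical all_reals all_analysis.
Set Implicit Arguments. Unset Strict Implicit. Unset Printing Implicit Defensive.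
Import Order.TTheory GRing.Theory Num.Theory numFieldNormedType.Exports.
Local Open Scope classical_set_scope.
Local Open Scope ring_scope.

Definition unit_interval {R : realType} : set R := `[0%R, 1%R].

Definition open_in_unit_interval {R : realType} (G : set R) : Prop :=
  exists U : set R, open U /\ G = U `&` unit_interval.

(* X contains a subspace homeomorphic to [0,1]: there is an embedding
   h : [0,1] -> X which is a homeomorphism onto its image h @` [0,1]
   (both with the subspace topologies), witnessed by an inverse g. *)
Definition contains_arc {R : realType} (X : topologicalType) : Prop :=
  exists (h : R -> X) (g : X -> R),
    {within (@unit_interval R), continuous h} /\
    {within h @` (@unit_interval R), continuous g} /\
    (forall t, unit_interval t -> g (h t) = t) /\
    (forall x, (h @` (@unit_interval R)) x -> unit_interval (g x)).

Definition quotient_onto_unit_interval {R : realType} {X : topologicalType}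
  (f : X -> R) : Prop :=
  f @` setT = (@unit_interval R) /\
  forall G : set R, G `<=` unit_interval ->
    (open_in_unit_interval G <-> open (f @^-1` G)).

(* Main.v *)
Require Import Defs.
From HB Require Import structures.
From mathcomp Require Import all_boot all_order all_algebra.
From mathcomp Require Import all_classical all_reals all_analysis.
Import Order.TTheory GRing.Theory Num.Theory numFieldNormedType.Exports.
Local Open Scope classical_set_scope.
Local Open Scope ring_scope.

Lemma quot_part (R : realType) (X : topologicalType) (h : R -> X) (f : X -> R) :
  {within (@unit_interval R), continuous h} -> continuous f ->
  range f `<=` unit_interval ->
  (forall y, unit_interval y -> exists2 t, unit_interval t & f (h t) = y) ->
  quotient_onto_unit_interval f.
Proof.
move=> hc fc frng surj; split.
  apply/seteqP; split; first exact: frng.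
  by move=> y /surj [t _ <-]; exists (h t).
move=> G GI; split.
  case=> U [oU ->].
  have -> : f @^-1` (U `&` unit_interval) = f @^-1` U.
    apply/seteqP; split => z /=; first by case.
    by move=> Uz; split => //; apply: frng; exists z.
  by apply: open_comp => // z _; exact: fc.
move=> oO.
pose q := f \o h.
pose C := unit_interval `&` q @^-1` (~` G).
have cC : compact C.
  have : closed (h @^-1` (~` (f @^-1` G)) : set (subspace unit_interval)).
    apply: preimage_closed; first by move=> t _; exact: hc.
    by apply: open_closedC.
  move/closed_subspaceP => [V cV VE].
  have -> : C = V `&` unit_interval by rewrite VE setIC.
  rewrite setIC; apply: compact_closedI => //; exact: segment_compact.
have qc : {within unit_interval, continuous q}.
  move=> t; exact: (continuous_comp (hc t) (fc (h t))).
have cqC : compact (q @` C).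
  apply: continuous_compact => //.
  apply: continuous_subspaceW qc; exact: subIsetl.
exists (~` (q @` C)); split.
  by apply: closed_openC; apply: compact_closed => //; exact: Rhausdorff.
apply/seteqP; split.
  move=> y Gy; split; last exact: GI.
  by move=> [t [It nGqt] qty]; apply: nGqt; rewrite /= qty.
move=> y [nqC Iy]; have [t It qt] := surj y Iy.
apply: contrapT => nGy; apply: nqC; exists t => //; split => //.
by rewrite /= /q /= qt.
Qed.

Theorem mainTheorem8 (R : realType) (X : topologicalType) :
  normal_space X -> hausdorff_space X -> @contains_arc R X ->
  forall x u : X, x <> u ->
  exists f : X -> R,
    continuous f /\ quotient_onto_unit_interval f /\ f x = 0 /\ f u = 1.
Proof.
move=> nX hX [h [g [hc [gc [gh gim]]]]] x u xu.
have hinj s t : unit_interval s -> unit_interval t -> h s = h t -> s = t.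
  by move=> Is It hst; rewrite -(gh s Is) -(gh t It) hst.
have I0 : @unit_interval R 0 by rewrite /unit_interval /= in_itv /= lexx ler01.
have I1 : @unit_interval R 1 by rewrite /unit_interval /= in_itv /= lexx ler01.
have h01 : h 0 <> h 1.
  by move=> /(hinj _ _ I0 I1) /eqP; rewrite eq_sym oner_eq0.
have [a [b [Ia [Ib [ab [hau hbx]]]]]] : exists a b : R,
    unit_interval a /\ unit_interval b /\
    ((a = 0 /\ b = 1) \/ (a = 1 /\ b = 0)) /\ h a <> u /\ h b <> x.
  case: (pselect (h 0 = u \/ h 1 = x)) => [H|H].
    exists 1, 0; do !split => //; [by right|move=> h1u|move=> h0x].
      by case: H => [h0u|h1x]; [apply: h01; rewrite h0u|apply: xu; rewrite -h1x].
    by case: H => [h0u|h1x]; [apply: xu; rewrite -h0x|apply: h01; rewrite h0x].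
  exists 0, 1; do !split => //; [by left|move=> h0u|move=> h1x]; apply: H; auto.
have hab : h a <> h b.
  by case: ab => -[-> ->] // /esym.
have cl1 := accessible_closed_set1 (hausdorff_accessible hX).
have cA : closed ([set x] `|` [set h a]) by apply: closedU.
have cB : closed ([set u] `|` [set h b]) by apply: closedU.
have AB0 : ([set x] `|` [set h a]) `&` ([set u] `|` [set h b]) = set0.
  apply/seteqP; split => // z [[E1|E1] [E2|E2]]; rewrite /= in E1 E2.
  - by apply: xu; rewrite -E1 -E2.
  - by apply: hbx; rewrite -E2 -E1.
  - by apply: hau; rewrite -E1 -E2.
  - by apply: hab; rewrite -E1 -E2.
have [f [fc fA fB frng]] := urysohn_ext_itv nX cA cB AB0 (@ltr01 R).
have fx : f x = 0 by apply: fA; exists x => //; left.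
have fu : f u = 1 by apply: fB; exists u => //; left.
have fa : f (h a) = 0 by apply: fA; exists (h a) => //; right.
have fb : f (h b) = 1 by apply: fB; exists (h b) => //; right.
exists f; split => //; split => //.
apply: (@quot_part R X h f hc fc frng) => y Iy.
have qc : {within `[0, 1], continuous (f \o h)}.
  move=> t; exact: (continuous_comp (hc t) (fc (h t))).
have [c Ic fc'] : exists2 c, c \in `[(0:R), 1] & (f \o h) c = y.
  apply: IVT => //.
  have : 0 <= y <= 1 by move: Iy; rewrite /unit_interval /= in_itv.
  case: ab => -[ea eb]; rewrite /= ea eb in fa fb; rewrite /= fa fb.
    by rewrite /Num.min /Num.max ltr01.
  by rewrite /Num.min /Num.max ltr10.
by exists c.
Qed.
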